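(* Let $\mathcal A$ be a $C^*$-algebra with identity $1$, let $\delta\colon\mathcal A\to\mathcal A$ be a $^*$-endomorphism, and let $\delta_*$ be a non-degenerate transfer operator for $(\mathcal A,\delta)$. Then: 1) $\delta_*(1)$ is an orthogonal projection lying in the center of $\mathcal A$; 2) $\delta_*(\mathcal A)=\delta_*(1)\mathcal A$; 3) the restriction of $\delta$ to $\delta_*(\mathcal A)$ is a $^*$-isomorphism of $\delta_*(\mathcal A)$ onto $\delta(\mathcal A)$, and the restriction of $\delta_*$ to $\delta(\mathcal A)$ is a $^*$-isomorphism of $\delta(\mathcal A)$ onto $\delta_*(\mathcal A)$, namely the inverse of the former.
   Context: A transfer operator for $(\mathcal A,\delta)$ is a continuous positive linear map $\delta_*\colon\mathcal A\to\mathcal A$ such that $\delta_*(\delta(a)b)=a\,\delta_*(b)$ for all $a,b\in\mathcal A$. A transfer operator $\delta_*$ is called non-degenerate if $\delta(\delta_*(1))=\delta(1)$ (equivalently, $\delta\circ\delta_*\circ\delta=\delta$, or equivalently $\delta\circ\delta_*$ is a conditional expectation onto $\delta(\mathcal A)$). *)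

(* Defs.v *)
From HB Require Import structures.
From mathcomp Require Import all_boot all_order all_algebra.
From mathcomp Require Import reals complex.
Set Implicit Arguments. Unset Strict Implicit. Unset Printing Implicit Defensive.
Import Order.TTheory GRing.Theory Num.Theory.
Local Open Scope ring_scope.
Local Open Scope complex_scope.

Section CStar.
Variables (R : realType) (A : algType R[i]) (star : A -> A) (nrm : A -> R).

Record is_unital_Cstar_algebra : Prop := {
  star_add : forall a b, star (a + b) = star a + star b;
  star_scale : forall (c : R[i]) a, star (c *: a) = c^* *: star a;
  star_mul : forall a b, star (a * b) = star b * star a;
  star_invol : forall a, star (star a) = a;
  nrm_ge0 : forall a, 0 <= nrm a;
  nrm_eq0 : forall a, nrm a = 0 -> a = 0;
  nrm_triangle : forall a b, nrm (a + b) <= nrm a + nrm b;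
  nrm_scale : forall (c : R[i]) a, (nrm (c *: a))%:C = `|c| * (nrm a)%:C;
  nrm_submul : forall a b, nrm (a * b) <= nrm a * nrm b;
  nrm_Cstar : forall a, nrm (star a * a) = nrm a ^+ 2;
  nrm_complete : forall u : nat -> A,
    (forall e : R, 0 < e -> exists N, forall m n, (N <= m)%N -> (N <= n)%N ->
        nrm (u m - u n) < e) ->
    exists l : A, forall e : R, 0 < e -> exists N, forall n, (N <= n)%N ->
        nrm (u n - l) < e
}.

Definition invertible (a : A) : Prop := exists b, a * b = 1 /\ b * a = 1.

Definition in_spectrum (a : A) (l : R[i]) : Prop := ~ invertible (a - l%:A).

Definition positive (a : A) : Prop :=
  star a = a /\ forall l : R[i], in_spectrum a l -> 0 <= l.

Definition linear_map (T : A -> A) : Prop :=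
  forall (c : R[i]) a b, T (c *: a + b) = c *: T a + T b.

Definition continuous_map (T : A -> A) : Prop :=
  forall a (e : R), 0 < e -> exists d : R, 0 < d /\
    forall b, nrm (b - a) < d -> nrm (T b - T a) < e.

Definition positive_map (T : A -> A) : Prop :=
  forall a, positive a -> positive (T a).

(* *-endomorphism (not required to be unital) *)
Definition star_endomorphism (delta : A -> A) : Prop :=
  [/\ linear_map delta,
      forall a b, delta (a * b) = delta a * delta b &
      forall a, delta (star a) = star (delta a)].

Definition transfer_operator (delta dstar : A -> A) : Prop :=
  [/\ linear_map dstar, continuous_map dstar, positive_map dstar &
      forall a b, dstar (delta a * b) = a * dstar b].

Definition nondegenerate_transfer_operator (delta dstar : A -> A) : Prop :=
  transfer_operator delta dstar /\ delta (dstar 1) = delta 1.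

End CStar.

Definition image_of {T U : Type} (f : T -> U) (y : U) : Prop := exists x, y = f x.

(* Main.v *)
Require Import Defs.
From HB Require Import structures.
From mathcomp Require Import all_boot all_order all_algebra.
From mathcomp Require Import reals complex.
Import Order.TTheory GRing.Theory Num.Theory.
Local Open Scope ring_scope.

Theorem proposition4 (R : realType) (A : algType R[i]) (star : A -> A) (nrm : A -> R)
  (HA : is_unital_Cstar_algebra star nrm)
  (delta dstar : A -> A)
  (Hdelta : star_endomorphism star delta)
  (Hdstar : nondegenerate_transfer_operator star nrm delta dstar) :
  (* 1) dstar 1 is an orthogonal projection in the center of A *)
  [/\ dstar 1 * dstar 1 = dstar 1 /\ star (dstar 1) = dstar 1
      /\ (forall a, dstar 1 * a = a * dstar 1),
  (* 2) dstar(A) = dstar(1) A *)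
      (forall x, image_of dstar x <-> exists a, x = dstar 1 * a) &
  (* 3) delta restricted to dstar(A) is a *-isomorphism onto delta(A)
        (it is a *-homomorphism since delta is), and dstar restricted
        to delta(A) is a *-isomorphism onto dstar(A), its inverse *)
      ((forall x y, image_of dstar x -> image_of dstar y ->
             delta x = delta y -> x = y) /\
          (forall y, image_of delta y -> exists x, image_of dstar x /\ delta x = y) /\
          (forall y1 y2, image_of delta y1 -> image_of delta y2 ->
             dstar (y1 * y2) = dstar y1 * dstar y2) /\
          (forall y, image_of delta y -> dstar (star y) = star (dstar y)) /\
          (forall y1 y2, image_of delta y1 -> image_of delta y2 ->
             dstar y1 = dstar y2 -> y1 = y2) /\
          (forall x, image_of dstar x -> exists y, image_of delta y /\ dstar y = x) /\
          (forall x, image_of dstar x -> dstar (delta x) = x) /\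
          (forall y, image_of delta y -> delta (dstar y) = y))].
Proof.
case: Hdelta => dlin dmul dst.
case: Hdstar => [[_ _ _ Ht] Hnd].
have d0 : dstar 0 = 0 by have := Ht 0 0; rewrite !mulr0 mul0r.
have dB : forall x y, delta (x - y) = delta x - delta y.
  by move=> x y; rewrite addrC -scaleN1r dlin scaleN1r addrC.
have kp : forall k, delta k = 0 -> forall b, k * dstar b = 0.
  by move=> k hk b; rewrite -Ht hk mul0r d0.
have Hd : forall a, dstar (delta a) = a * dstar 1 by move=> a; rewrite -Ht mulr1.
have d1 : delta (dstar 1 - 1) = 0 by rewrite dB Hnd subrr.
have pp : dstar 1 * dstar 1 = dstar 1.
  by have := kp _ d1 1; rewrite mulrBl mul1r => /eqP; rewrite subr_eq0 => /eqP.
have s1 : star 1 = 1.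
  by rewrite -[LHS]mulr1 -{2}(star_invol HA 1) -(star_mul HA) mulr1 (star_invol HA).
have s0 : star 0 = 0.
  by have := star_mul HA 0 (star 0); rewrite (star_invol HA) !mul0r.
have ker_mul : forall k x, delta k = 0 -> delta (k * x) = 0.
  by move=> k x hk; rewrite dmul hk mul0r.
have sd1 : delta (star (dstar 1 - 1)) = 0 by rewrite dst d1 s0.
have spp : star (dstar 1) * dstar 1 = dstar 1.
  have := kp _ sd1 1.
  have -> : star (dstar 1) = star (dstar 1 - 1) + 1.
    by rewrite -[X in _ + X]s1 -(star_add HA) subrK.
  by move=> h; rewrite mulrDl h mul1r add0r.
have sp : star (dstar 1) = dstar 1.
  by rewrite -{1}spp (star_mul HA) (star_invol HA) spp.
have c1 : forall x, x * dstar 1 = dstar 1 * x * dstar 1.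
  move=> x; have := kp _ (ker_mul _ x d1) 1; rewrite !mulrBl mul1r.
  by move=> /eqP; rewrite subr_eq0 => /eqP.
have cen : forall a, dstar 1 * a = a * dstar 1.
  move=> a; have := congr1 star (c1 (star a)).
  rewrite !(star_mul HA) sp !(star_invol HA) => h.
  by rewrite c1 -mulrA -h.
have im : forall x, image_of dstar x -> x = dstar 1 * x.
  move=> x [b ->]; have := kp _ d1 b; rewrite mulrBl mul1r.
  by move=> /eqP; rewrite subr_eq0 => /eqP.
have dp : forall x, delta (dstar 1 * x) = delta x.
  by move=> x; rewrite dmul Hnd -dmul mul1r.
split.
- by [].
- move=> x; split; first by move=> h; exists x; exact: im.
  by move=> [a ->]; exists (delta a); rewrite Hd cen.
split.
  move=> x y hx hy e; rewrite (im _ hx) (im _ hy); apply/eqP; rewrite -subr_eq0.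
  have k : delta (x - y) = 0 by rewrite dB e subrr.
  have := kp _ k 1; rewrite -mulrBr cen => ->; by [].
split.
  move=> y [a ->]; exists (dstar 1 * a); split; first by exists (delta a); rewrite Hd cen.
  by rewrite dp.
split.
  move=> y1 y2 [a ->] [b ->]; rewrite -dmul !Hd.
  rewrite -(cen b) (mulrA (a * dstar 1) (dstar 1) b) -(mulrA a (dstar 1) (dstar 1)) pp.
  by rewrite -(mulrA a (dstar 1) b) (cen b) (mulrA a b (dstar 1)).
split.
  move=> y [a ->]; rewrite -dst !Hd (star_mul HA) sp cen; by [].
split.
  move=> y1 y2 [a ->] [b ->]; rewrite !Hd => e.
  by rewrite -(dp a) -(dp b) cen e -cen.
split.
  move=> x hx; exists (delta x); split; first by exists x.
  by rewrite Hd -cen -im.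
split.
  by move=> x hx; rewrite Hd -cen -im.
by move=> y [a ->]; rewrite Hd -cen dp.
Qed.
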